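(* Let $S \subseteq \mathbb{R}^n$ be nonempty, closed and convex, and let $F_i = f_i + g_i$, $i=1,\dots,m$, where each $f_i \colon S \to \mathbb{R}$ is continuously differentiable and each $g_i \colon S \to \mathbb{R}$ is convex and continuous. For $\ell>0$ and $x \in S$ define \[ w_\ell(x) := \max_{y \in S} \min_{i = 1,\dots,m} \left\{ \nabla f_i(x)^\top (x - y) + g_i(x) - g_i(y) - \frac{\ell}{2}\|x - y\|^2 \right\}, \] and let $W_\ell(x)$ be the (unique) maximizer $y \in S$ attaining this maximum. Then, for all $\ell > 0$, $w_\ell$ and $W_\ell$ are continuous on $S$. *)

(* Defs.v *)
From HB Require Import structures.
From mathcomp Require Import all_boot all_order all_algebra.
From mathcomp Require Import all_classical all_reals all_analysis.
Set Implicit Arguments. Unset Strict Implicit. Unset Printing Implicit Defensive.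
Import Order.TTheory GRing.Theory Num.Theory.
Import numFieldNormedType.Exports.
Local Open Scope classical_set_scope.
Local Open Scope ring_scope.

Definition sqnorm (R : realType) (n : nat) (x : 'rV[R]_n) : R :=
  \sum_(j < n) (x 0 j) ^+ 2.

Definition convex_set_on (R : realType) (n : nat) (S : set 'rV[R]_n) : Prop :=
  forall x y (t : R), S x -> S y -> 0 <= t <= 1 ->
    S (t *: x + (1 - t) *: y).

Definition convex_fun_on (R : realType) (n : nat) (S : set 'rV[R]_n)
  (g : 'rV[R]_n -> R) : Prop :=
  forall x y (t : R), S x -> S y -> 0 <= t <= 1 ->
    g (t *: x + (1 - t) *: y) <= t * g x + (1 - t) * g y.

Definition grad (R : realType) (n : nat) (f : 'rV[R]_n -> R) (x : 'rV[R]_n)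
  : 'rV[R]_n := \row_j ('d f x (delta_mx 0 j)).

Definition C1_on (R : realType) (n : nat) (S : set 'rV[R]_n)
  (f : 'rV[R]_n -> R) : Prop :=
  exists U : set 'rV[R]_n, [/\ open U, S `<=` U,
    (forall x, U x -> differentiable f x) &
    (forall x, U x -> {for x, continuous (grad f)})].

(* the inner objective:  min_i { grad f_i(x)^T (x - y) + g_i(x) - g_i(y)
                                  - l/2 ||x - y||^2 } ,  i ranging over m.+1
   indices; grad f_i(x)^T (x - y) is the differential 'd f_i x (x - y) *)
Definition phi (R : realType) (n m : nat) (f g : 'I_m.+1 -> 'rV[R]_n -> R)
  (l : R) (x y : 'rV[R]_n) : R :=
  let F := fun i : 'I_m.+1 =>
    'd (f i) x (x - y) + g i x - g i y - l / 2 * sqnorm (x - y) in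
  \big[Num.min/F ord0]_(i < m.+1) F i.

Definition w_val (R : realType) (n m : nat) (S : set 'rV[R]_n)
  (f g : 'I_m.+1 -> 'rV[R]_n -> R) (l : R) (x : 'rV[R]_n) : R :=
  sup [set phi f g l x y | y in S].

Definition is_maximizer (R : realType) (n m : nat) (S : set 'rV[R]_n)
  (f g : 'I_m.+1 -> 'rV[R]_n -> R) (l : R) (x y : 'rV[R]_n) : Prop :=
  S y /\ forall z, S z -> phi f g l x z <= phi f g l x y.

(* Main.v *)
Require Import Defs.
From HB Require Import structures.
From mathcomp Require Import all_boot all_order all_algebra.
From mathcomp Require Import all_classical all_reals all_analysis.
From mathcomp Require Import ring lra.
Import Order.TTheory GRing.Theory Num.Theory.
Import numFieldNormedType.Exports.
Local Open Scope classical_set_scope.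
Local Open Scope ring_scope.
Set Implicit Arguments. Unset Strict Implicit. Unset Printing Implicit Defensive.

Lemma fin_arith (R : realType) (a1 a2 a3 gg q p e eta w nn D l : R) :
 -(nn*D*eta) <= a1 -> a1 <= nn*D*eta ->
 -(nn*eta) <= a2 -> a2 <= nn*eta ->
 -(nn*eta*w) <= a3 -> a3 <= nn*eta*w ->
 -eta < gg -> gg < eta ->
 0 <= q -> q <= nn*eta ->
 -(l*(nn*eta*w)) <= p -> p <= l*(nn*eta*w) ->
 0 < l -> 0 <= nn -> 0 <= D -> 0 <= eta -> 1 <= w ->
 eta * (nn*D + 2*nn + 1 + l/2*nn + l*nn) <= e ->
 `|a1 + a2 - a3 + (-gg) - l/2*q + p| <= e*w.
Proof.
move=> ? ? ? ? ? ? ? ? ? ? ? ? l0 n0 D0 e0 w1 hK.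
have w1' : 0 <= w - 1 by rewrite subr_ge0.
have c1 := mulr_ge0 (mulr_ge0 (mulr_ge0 n0 D0) e0) w1'.
have c2 := mulr_ge0 (mulr_ge0 n0 e0) w1'.
have c3 := mulr_ge0 e0 w1'.
have c4 := mulr_ge0 (mulr_ge0 (ltW l0) (mulr_ge0 n0 e0)) w1'.
have c5 : 0 <= (e - eta * (nn*D + 2*nn + 1 + l/2*nn + l*nn)) * w.
  by rewrite mulr_ge0 ?subr_ge0 // (le_trans ler01 w1).
have c6 : 0 <= l / 2 * q by rewrite mulr_ge0 // divr_ge0 // ltW.
have c7 : l / 2 * q <= l / 2 * (nn * eta) by rewrite ler_wpM2l // divr_ge0 // ltW.
rewrite ler_norml; apply/andP; split; lra.
Qed.

Lemma W_arith (R : realType) (l e' eta c d s2 A B C Dd : R) :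
  0 < l -> 0 < eta -> 0 <= c -> 0 <= d -> 0 <= e' ->
  e' <= l / 8 -> e' * (2 + 3 * c) <= eta * l / 4 -> e' * (3 + 5 * c) <= eta ->
  A <= B - l / 4 * d -> C <= Dd - l / 4 * d ->
  `|Dd - A| <= e' * (1 + s2) -> `|C - B| <= e' * (1 + c) ->
  s2 <= 2 * d + 2 * c ->
  d <= eta /\ `|Dd - B| <= eta.
Proof.
move=> l0 eta0 c0 d0 e0 h1 h2 h3 hA hC hDA hCB hs.
rewrite ler_norml in hDA; rewrite ler_norml in hCB.
case/andP: hDA => u1 u2; case/andP: hCB => v1 v2.
have k1 : e' * s2 <= e' * (2 * d + 2 * c) by rewrite ler_wpM2l.
have k2 : e' * d <= l / 8 * d by rewrite ler_wpM2r.
have key : l / 4 * d <= e' * (2 + 3 * c).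
  rewrite mulrDr in u2 v1; rewrite mulrDr in k1; lra.
have k3 : e' * (2 + 3 * c) <= l / 8 * (2 + 3 * c).
  by rewrite ler_wpM2r // addr_ge0 // mulr_ge0.
have l4 : 0 < l / 4 by rewrite divr_gt0.
split.
  have : l / 4 * (d - eta) <= 0.
    rewrite mulrBr; have -> : l / 4 * eta = eta * l / 4 by field. lra.
  by rewrite pmulr_rle0 // subr_le0.
have dle : d <= (2 + 3 * c) / 2.
  have : l / 4 * (d - (2 + 3 * c) / 2) <= 0.
    rewrite mulrBr; have -> : l / 4 * ((2 + 3 * c) / 2) = l / 8 * (2 + 3 * c) by field.
    lra.
  by rewrite pmulr_rle0 // subr_le0.
have k4 : e' * d <= e' * ((2 + 3 * c) / 2) by rewrite ler_wpM2l.
have k5 : e' * ((2 + 3 * c) / 2) = e' + 3 / 2 * (e' * c) by field.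
rewrite mulrDr in u2 v1 h3; rewrite mulrDr in k1.
have k6 : 0 <= e' * c by rewrite mulr_ge0.
have k7 : 0 <= l / 4 * d by rewrite mulr_ge0 // ltW.
rewrite ler_norml; apply/andP; split; lra.
Qed.

Section Alg.
Variables (R : realType) (n : nat).
Implicit Types (u v w : 'rV[R]_n).

Definition dot u v : R := \sum_(j < n) u 0 j * v 0 j.

Lemma sqnorm_dot v : sqnorm v = dot v v.
Proof. by rewrite /sqnorm /dot; apply: eq_bigr => j _; rewrite expr2. Qed.

Lemma sqnorm_ge0 v : 0 <= sqnorm v.
Proof. by apply: sumr_ge0 => j _; rewrite sqr_ge0. Qed.

Lemma sqnorm_eq0 v : sqnorm v = 0 -> v = 0.
Proof.
move=> /eqP; rewrite psumr_eq0; last by move=> j _; rewrite sqr_ge0.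
move=> /allP H; apply/rowP => j; rewrite mxE.
have := H j (mem_index_enum j); by rewrite /= sqrf_eq0 => /eqP.
Qed.

Lemma entry_le_sqnorm v j : (v 0 j) ^+ 2 <= sqnorm v.
Proof.
rewrite /sqnorm (bigD1 j) //= lerDl; apply: sumr_ge0 => k _; exact: sqr_ge0.
Qed.

Lemma entry_le_norm v j : `|v 0 j| <= `|v|.
Proof.
rewrite [leRHS]/Num.Def.normr /= mx_normrE; apply/bigmax_geP; right => /=.
by exists (0, j).
Qed.

Lemma norm_lt_entries v e : 0 < e -> (forall j, `|v 0 j| < e) -> `|v| < e.
Proof.
move=> e0 H; rewrite [ltLHS]/Num.Def.normr /= mx_normrE; apply/bigmax_ltP; split => //.
by move=> [i j] _ /=; rewrite (ord1 i); exact: H.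
Qed.

Lemma norm_sq_le v : `|v| ^+ 2 <= sqnorm v.
Proof.
have [->|v0] := eqVneq (`|v|) 0; first by rewrite expr0n /= sqnorm_ge0.
have [[i j] /= E] := mx_norm_neq0 v0.
by rewrite [X in X ^+ 2]/Num.Def.normr /= E (ord1 i) real_normK ?num_real // entry_le_sqnorm.
Qed.

Lemma dotC u v : dot u v = dot v u.
Proof. by apply: eq_bigr => j _; rewrite mulrC. Qed.

Lemma dot_norm_le u v : `|dot u v| <= n%:R * (`|u| * `|v|).
Proof.
rewrite /dot; apply: le_trans (ler_norm_sum _ _ _) _.
have -> : n%:R * (`|u| * `|v|) = \sum_(j < n) (`|u| * `|v|).
  by rewrite sumr_const card_ord mulr_natl.
apply: ler_sum => j _.
by rewrite normrM ler_pM // entry_le_norm.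
Qed.

Lemma young u v (eta : R) : 0 < eta ->
  2 * dot u v <= eta * sqnorm u + eta^-1 * sqnorm v.
Proof.
move=> e0; rewrite /dot /sqnorm mulr_sumr !mulr_sumr -big_split /=.
apply: ler_sum => j _.
set a := u 0 j; set b := v 0 j; set c := eta^-1.
have ce : c * eta = 1 by rewrite mulVf ?gt_eqF.
have H : 0 <= c * (eta * a - b) ^+ 2 by rewrite mulr_ge0 ?sqr_ge0 ?invr_ge0 ?ltW.
have E : c * (eta * a - b) ^+ 2 = (c * eta) * (eta * a ^+ 2 - 2 * a * b) + c * b ^+ 2 by ring.
rewrite E ce mul1r in H; rewrite !expr2 in H *; lra.
Qed.

Lemma sqnormD_le u v : sqnorm (u + v) <= 2 * sqnorm u + 2 * sqnorm v.
Proof.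
rewrite /sqnorm !mulr_sumr -big_split /=; apply: ler_sum => j _.
rewrite mxE; set a := u 0 j; set b := v 0 j.
have := sqr_ge0 (a - b); rewrite !expr2; lra.
Qed.


Lemma sum_lin3 (a b c d : 'I_n -> R) (al be ga : R) :
  (forall j, a j = al * b j + be * c j + ga * d j) ->
  \sum_j a j = al * \sum_j b j + be * \sum_j c j + ga * \sum_j d j.
Proof.
by move=> H; rewrite !mulr_sumr -!big_split; apply: eq_bigr => j _; rewrite H.
Qed.

Lemma diff_dot (f : 'rV[R]_n -> R) x v : 'd f x v = dot (grad f x) v.
Proof.
rewrite {1}(row_sum_delta v) linear_sum /dot; apply: eq_bigr => j _.
by rewrite linearZ /= /grad mxE mulrC.
Qed.

Definition mid u v : 'rV[R]_n := 2^-1 *: u + (1 - 2^-1) *: v.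

Lemma sq_mid x y z : sqnorm (x - mid y z) =
  2^-1 * sqnorm (x - y) + 2^-1 * sqnorm (x - z) + (- 4^-1) * sqnorm (y - z).
Proof.
apply: sum_lin3 => j; rewrite !mxE; by field. 
Qed.

Lemma x_mid x y z : x - mid y z = 2^-1 *: (x - y) + (1 - 2^-1) *: (x - z).
Proof. apply/rowP => j; rewrite !mxE; ring. Qed.

Lemma norm_lt_of_sq v e : 0 < e -> sqnorm v < e ^+ 2 -> `|v| < e.
Proof.
move=> e0 h; have := le_lt_trans (norm_sq_le v) h.
rewrite ltr_sqr //; rewrite qualifE /=; [exact: normr_ge0 | exact: ltW].
Qed.

Lemma sqnormD w v : sqnorm (w + v) = 1 * sqnorm w + 2 * dot w v + 1 * sqnorm v.
Proof. by apply: sum_lin3 => j; rewrite !mxE; ring. Qed.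

Lemma sqnormN v : sqnorm (- v) = sqnorm v.
Proof. by apply: eq_bigr => j _; rewrite mxE sqrrN. Qed.

Lemma dotBl a b v : dot (a - b) v = dot a v - dot b v.
Proof. by rewrite /dot -sumrB; apply: eq_bigr => j _; rewrite !mxE mulrBl. Qed.

Lemma dotBr a u v : dot a (u - v) = dot a u - dot a v.
Proof. by rewrite /dot -sumrB; apply: eq_bigr => j _; rewrite !mxE mulrBr. Qed.

Lemma dotNr a v : dot a (- v) = - dot a v.
Proof. by rewrite /dot -sumrN; apply: eq_bigr => j _; rewrite !mxE mulrN. Qed.

Lemma sqnormB u v : sqnorm (u - v) = sqnorm u - 2 * dot u v + sqnorm v.
Proof. by rewrite sqnormD sqnormN dotNr; ring. Qed.

Lemma norm_le_1sq v : `|v| <= 1 + sqnorm v.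
Proof.
have := norm_sq_le v; have := sqr_ge0 (`|v| - 1); rewrite !expr2.
have := normr_ge0 v; nra.
Qed.

Lemma diff_identity (Dx D0 x x0 y : 'rV[R]_n) (L : R) :
  dot Dx (x - y) - dot D0 (x0 - y) - L * (sqnorm (x - y) - sqnorm (x0 - y)) =
  dot D0 (x - x0) + dot (Dx - D0) (x - x0) - dot (Dx - D0) (y - x0)
  - L * sqnorm (x - x0) + 2 * L * dot (x - x0) (y - x0).
Proof.
rewrite /dot /sqnorm -!sumrB !mulr_sumr -!sumrB -!big_split /= -!sumrB.
rewrite -big_split /=; by apply: eq_bigr => j _; rewrite !mxE; ring.
Qed.

End Alg.

Section Topo.
Variables (R : realType) (n : nat).

Lemma near_ball (x : 'rV[R]_n) (P : 'rV[R]_n -> Prop) :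
  (\forall t \near x, P t) -> exists2 e, 0 < e & forall z, `|x - z| < e -> P z.
Proof.
move/nbhs_ballP => [e e0 He]; exists e => // z hz; apply: He.
by rewrite -ball_normE /ball_ /=.
Qed.

Lemma ball_near (x : 'rV[R]_n) (P : 'rV[R]_n -> Prop) e : 0 < e ->
  (forall z, `|x - z| < e -> P z) -> \forall t \near x, P t.
Proof.
move=> e0 He; apply/nbhs_ballP; exists e => // z hz; apply: He.
by move: hz; rewrite -ball_normE /ball_ /=.
Qed.

Lemma within_cont_eps (A : set 'rV[R]_n) (V : normedModType R) (h : 'rV[R]_n -> V) x :
  {within A, continuous h} -> A x -> forall e, 0 < e ->
  \forall z \near x, A z -> `|h x - h z| < e.
Proof.
move=> hc Ax e e0.
have := (subspace_continuousP A h).1 hc x Ax.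
by move/cvgrPdist_lt => /(_ e e0).
Qed.

Lemma cont_eps (V : normedModType R) (h : 'rV[R]_n -> V) x :
  {for x, continuous h} -> forall e, 0 < e ->
  \forall z \near x, `|h x - h z| < e.
Proof. by move=> hc e e0; move/cvgrPdist_lt: hc => /(_ e e0). Qed.

Lemma eps_within_cont (A : set 'rV[R]_n) (V : normedModType R) (h : 'rV[R]_n -> V) :
  (forall x, A x -> forall e, 0 < e -> \forall z \near x, A z -> `|h x - h z| < e) ->
  {within A, continuous h}.
Proof.
move=> H; apply/(subspace_continuousP A h) => x Ax.
by apply/cvgrPdist_lt => e e0; apply: H.
Qed.

End Topo.

Section Main.
Variables (R : realType) (n m : nat) (S : set 'rV[R]_n)
  (f g : 'I_m.+1 -> 'rV[R]_n -> R) (l : R).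
Hypothesis l0 : 0 < l.
Hypothesis Sconv : convex_set_on S.
Hypothesis gconv : forall i, convex_fun_on S (g i).

Definition Fi i (x y : 'rV[R]_n) : R :=
  'd (f i) x (x - y) + g i x - g i y - l / 2 * sqnorm (x - y).

Local Notation H := (phi f g l).

Lemma phi_le x y i : H x y <= Fi i x y.
Proof. exact: bigmin_le. Qed.

Lemma phi_ge x y c : (forall i, c <= Fi i x y) -> c <= H x y.
Proof. by move=> Hc; apply: le_bigmin => [|i _]; apply: Hc. Qed.

Lemma S_mid y z : S y -> S z -> S (mid y z).
Proof. by move=> Sy Sz; apply: Sconv => //; rewrite invr_ge0 ler0n /= invf_le1 ?ler1n. Qed.

Lemma Fi_concave i x y z : S y -> S z ->
  2^-1 * (Fi i x y + Fi i x z) + l / 8 * sqnorm (y - z) <= Fi i x (mid y z).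
Proof.
move=> Sy Sz.
have hd : 'd (f i) x (x - mid y z) = 2^-1 * 'd (f i) x (x - y) + (1 - 2^-1) * 'd (f i) x (x - z).
  by rewrite x_mid linearD !linearZ.
have := @gconv i _ _ 2^-1 Sy Sz.
rewrite invr_ge0 ler0n /= invf_le1 ?ler1n // => /(_ isT) hg.
rewrite -/(mid y z) in hg.
rewrite /Fi hd sq_mid.
have -> : (1 - 2^-1 : R) = 2^-1 by field.
rewrite (_ : (1 - 2^-1 : R) = 2^-1) in hg; last by field.
set a := 'd (f i) x (x - y); set b := 'd (f i) x (x - z).
set s1 := sqnorm (x - y); set s2 := sqnorm (x - z); set s3 := sqnorm (y - z).
set L := l / 2.
have -> : l / 8 = L * 4^-1 by rewrite /L; field.
lra.
Qed.



Lemma phi_concave x y z : S y -> S z ->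
  2^-1 * (H x y + H x z) + l / 8 * sqnorm (y - z) <= H x (mid y z).
Proof.
move=> Sy Sz; apply: phi_ge => i; apply: (le_trans _ (Fi_concave i x Sy Sz)).
rewrite lerD2r ler_pM2l ?invr_gt0 ?ltr0n //.
by apply: lerD; apply: phi_le.
Qed.

Lemma max_growth x ys y : is_maximizer S f g l x ys -> S y ->
  H x y <= H x ys - l / 4 * sqnorm (y - ys).
Proof.
move=> [Sys Hm] Sy.
have h1 := phi_concave x Sy Sys.
have h2 := Hm _ (S_mid Sy Sys).
have -> : l / 4 = 2 * (l / 8) by field.
rewrite -mulrA; set s := l / 8 * sqnorm (y - ys); rewrite -/s in h1.
lra.
Qed.

Lemma max_unique x y1 y2 : is_maximizer S f g l x y1 ->
  is_maximizer S f g l x y2 -> y1 = y2.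
Proof.
move=> m1 m2.
have h1 := max_growth m2 m1.1.
have h2 := max_growth m1 m2.1.
have e : sqnorm (y2 - y1) = sqnorm (y1 - y2).
  by rewrite -opprB /sqnorm; apply: eq_bigr => j _; rewrite mxE sqrrN.
rewrite e in h2.
have hs := sqnorm_ge0 (y1 - y2).
have : l / 4 * sqnorm (y1 - y2) <= 0 by lra.
rewrite pmulr_rle0 ?divr_gt0 ?ltr0n // => hs'.
have /sqnorm_eq0 /eqP : sqnorm (y1 - y2) = 0 by apply/eqP; rewrite eq_le hs' hs.
by rewrite subr_eq0 => /eqP.
Qed.

Lemma quad_bound (K r : R) : K * r - l / 2 * r ^+ 2 <= K ^+ 2 / (2 * l).
Proof.
rewrite ler_pdivlMr ?mulr_gt0 ?ltr0n //.
have := sqr_ge0 (K - l * r).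
have -> : (K * r - l / 2 * r ^+ 2) * (2 * l) = 2 * (K * (l * r)) - (l * r) ^+ 2.
  by field.
rewrite sqrrB; lra.
Qed.

Hypothesis gcont : forall i, {within S, continuous (g i)}.

Lemma phi_ub x : S x -> exists M, forall y, S y -> H x y <= M.
Proof.
move=> Sx.
have [d d0 hd] := near_ball (within_cont_eps (@gcont ord0) Sx ltr01).
set D := grad (f ord0) x.
set K := n%:R * `|D| + 2 / d.
exists (1 + K ^+ 2 / (2 * l)) => y Sy.
set r := `|x - y|.
have r0 : 0 <= r by rewrite normr_ge0.
have glow : g ord0 x - 1 - 2 / d * r <= g ord0 y.
  case: (ltP r d) => hr.
    have := hd y hr Sy; rewrite ltr_norml => /andP[h1 h2].
    have : 0 <= 2 / d * r by apply: mulr_ge0 => //; apply: divr_ge0 => //; exact: ltW.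
    lra.
  have rpos : 0 < r by apply: lt_le_trans hr.
  set t := d / (2 * r).
  have t0 : 0 < t by rewrite divr_gt0 ?mulr_gt0 ?ltr0n.
  have t1 : t <= 1.
    rewrite ler_pdivrMr ?mulr_gt0 ?ltr0n // mul1r.
    lra.
  have Sz : S (t *: y + (1 - t) *: x) by apply: Sconv => //; rewrite ltW.
  have exz : x - (t *: y + (1 - t) *: x) = t *: (x - y).
    by apply/rowP => j; rewrite !mxE; ring.
  have nz : `|x - (t *: y + (1 - t) *: x)| < d.
    rewrite exz mx_normZ gtr0_norm // -/r.
    have -> : t * r = d / 2 by rewrite /t; field; rewrite gt_eqF.
    lra.
  have := hd _ nz Sz; rewrite ltr_norml => /andP[h1 h2].
  have := @gconv ord0 _ _ t Sy Sx; rewrite (ltW t0) t1 => /(_ isT) hc.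
  have ht : t^-1 = 2 / d * r by rewrite /t invf_div; field; rewrite gt_eqF.
  have : t * (g ord0 x - 1 - 2 / d * r) <= t * g ord0 y.
    rewrite -ht mulrBr mulrBr mulfV ?gt_eqF //.
    rewrite mulrBl mul1r in hc; rewrite mulr1.
    set a := g ord0 x in h1 h2 hc *; set b := g ord0 y in hc *.
    set c := g ord0 (t *: y + (1 - t) *: x) in h1 h2 hc.
    lra.
  by rewrite ler_pM2l.
apply: (le_trans (phi_le x y ord0)); rewrite /Fi diff_dot -/D.
have hdot : dot D (x - y) <= n%:R * (`|D| * r).
  exact: le_trans (ler_norm _) (dot_norm_le _ _).
have hsq : r ^+ 2 <= sqnorm (x - y) := norm_sq_le _.
have q := quad_bound K r.
have l2 : 0 < l / 2 by rewrite divr_gt0 ?ltr0n.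
have : l / 2 * r ^+ 2 <= l / 2 * sqnorm (x - y) by rewrite ler_pM2l.
move: q; rewrite /K.
set A := n%:R * `|D|. set B := 2 / d.
rewrite mulrA in hdot; rewrite -/A in hdot.
move=> q q2.
rewrite -/B in glow; rewrite mulrDl in q.
lra.
Qed.

Lemma Fi_usc i x ys : S ys -> forall e, 0 < e ->
  \forall y \near ys, S y -> Fi i x y <= Fi i x ys + e.
Proof.
move=> Sys e e0.
have e3 : 0 < e / 3 by rewrite divr_gt0 ?ltr0n.
have hg := within_cont_eps (@gcont i) Sys e3.
set D := grad (f i) x; set w := x - ys.
set C := n%:R * `|D| + l * (n%:R * `|w|) + 1.
have C0 : 0 < C.
  rewrite /C; apply: ltr_pwDr => //; apply: addr_ge0; rewrite ?mulr_ge0 ?ler0n ?normr_ge0 ?ltW //.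
have dpos : 0 < e / 3 / C by rewrite divr_gt0.
apply: filterS2 hg (ball_near dpos (fun z h => h)) => y hy hb Sy.
have {hy} hy := hy Sy; rewrite ltr_norml in hy; case/andP: hy => hy1 hy2.
set v := ys - y.
have hxy : x - y = w + v by rewrite /w /v addrA subrK.
rewrite /Fi hxy sqnormD.
have hd : 'd (f i) x (w + v) = 'd (f i) x (x - ys) + 'd (f i) x v by rewrite linearD.
rewrite hd !diff_dot -/D.
rewrite -/w.
have nv : `|v| <= e / 3 / C by rewrite ltW.
have h1 : dot D v <= n%:R * `|D| * (e / 3 / C).
  apply: (le_trans (ler_norm _)); apply: (le_trans (dot_norm_le _ _)).
  by rewrite mulrA ler_wpM2l // mulr_ge0 ?ler0n ?normr_ge0.
have h2 : - dot w v <= n%:R * `|w| * (e / 3 / C).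
  apply: (le_trans (ler_norm _)); rewrite normrN.
  apply: (le_trans (dot_norm_le _ _)).
  by rewrite mulrA ler_wpM2l // mulr_ge0 ?ler0n ?normr_ge0.
have h3 : 0 <= sqnorm v := sqnorm_ge0 v.
have hC : (n%:R * `|D| + l * (n%:R * `|w|)) * (e / 3 / C) <= e / 3.
  rewrite (_ : _ * (e / 3 / C) = e / 3 * ((n%:R * `|D| + l * (n%:R * `|w|)) / C)); last by field; rewrite gt_eqF.
  rewrite ler_piMr ?ltW // ltr_pdivrMr // mul1r.
  by rewrite /C ltrDl.
have l2 : 0 < l / 2 by rewrite divr_gt0.
set a := dot D (x - ys) in h1 *; set b := dot D v in h1 *.
set p := dot w v in h2 *. set q := sqnorm v in h3 *.
set s := sqnorm w. set eta := e / 3 / C in h1 h2 hC nv *.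
set gy := g i y in hy1 hy2 *; set gys := g i ys in hy1 hy2 *.
rewrite mulrDl in hC.
have : l / 2 * (1 * s + 2 * p + 1 * q) >= l / 2 * s + l * p.
  have -> : l / 2 * (1 * s + 2 * p + 1 * q) = l / 2 * s + l * p + l / 2 * q by field.
  by rewrite lerDl mulr_ge0 // ltW.
have : l * - p <= l * (n%:R * `|w| * eta) by rewrite ler_pM2l.
rewrite mulrN.
have -> : l * (n%:R * `|w| * eta) = l * (n%:R * `|w|) * eta by rewrite !mulrA.
lra.
Qed.

Lemma phi_usc x ys : S ys -> forall e, 0 < e ->
  \forall y \near ys, S y -> H x y <= H x ys + e.
Proof.
move=> Sys e e0.
near=> y => Sy.
have hall : forall i, S y -> Fi i x y <= Fi i x ys + e.
  near: y; apply: filter_forall => i; exact: Fi_usc.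
have : H x y - e <= H x ys.
  apply: phi_ge => i; rewrite lerBlDr.
  exact: le_trans (phi_le x y i) (hall i Sy).
lra.
Unshelve. all: by end_near.
Qed.

Hypothesis Sclosed : closed S.

Lemma natSinv_le (N k : nat) : (N <= k)%N -> k.+1%:R^-1 <= N.+1%:R^-1 :> R.
Proof.
move=> hk; rewrite lef_pV2 ?qualifE /= ?ltr0n // ler_nat ltnS. exact: hk.
Qed.

Lemma max_exists x : S x -> exists ys, is_maximizer S f g l x ys.
Proof.
move=> Sx.
set E := [set H x y | y in S].
have hE : has_sup E.
  split; first by exists (H x x), x.
  have [M hM] := phi_ub Sx; exists M => _ [y Sy <-]; exact: hM.
set s := sup E.
have hub : forall y, S y -> H x y <= s.
  by move=> y Sy; apply: sup_upper_bound => //; exists y.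
have hadh : forall k : nat, exists y, S y /\ s - k.+1%:R^-1 < H x y.
  move=> k; have k0 : 0 < k.+1%:R^-1 :> R by rewrite invr_gt0 ltr0n.
  by have [_ [y Sy <-] hy] := sup_adherent k0 hE; exists y.
have [u hu] := choice hadh.
have l8 : 0 < l / 8 by rewrite divr_gt0 ?ltr0n.
have cu : cvg (u @ \oo).
  apply/cauchy_cvgP; apply: cauchy_exP => eps eps0.
  have he : 0 < l / 8 * eps ^+ 2 by rewrite mulr_gt0 ?exprn_gt0.
  have [N hN] := filter_ex (near_infty_natSinv_lt (PosNum he)).
  exists (u N); exists N => // k /= hk.
  rewrite -ball_normE /ball_ /=; apply: norm_lt_of_sq => //.
  rewrite -(ltr_pM2l l8).
  have h1 := phi_concave x (hu N).1 (hu k).1.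
  have h2 := hub _ (S_mid (hu N).1 (hu k).1).
  have h3 := (hu N).2; have h4 := (hu k).2.
  have h5 := natSinv_le hk.
  simpl in hN.
  set a := N.+1%:R^-1 in hN h3 h5; set b := k.+1%:R^-1 in h4 h5.
  set c := l / 8 * sqnorm (u N - u k) in h1 *. set d := l / 8 * eps ^+ 2 in hN *.
  lra.
set ys := lim (u @ \oo).
have Sys : S ys.
  apply: (closed_cvg S Sclosed _ ys cu).
  by exists 0%N => // k _; case: (hu k).
exists ys; split => // z Sz; apply: (le_trans (hub z Sz)).
apply/ler_addgt0Pr => e e0.
have e2 : 0 < e / 2 by rewrite divr_gt0 ?ltr0n.
have hn : \forall k \near \oo, S (u k) -> H x (u k) <= H x ys + e / 2 := cu _ (phi_usc x Sys e2).
have [k [hk1 hk2]] := filter_ex (filterI hn (near_infty_natSinv_lt (PosNum e2))).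
have := hk1 (hu k).1; have := (hu k).2; simpl in hk2.
set a := k.+1%:R^-1 in hk2 *; lra.
Qed.

Hypothesis fC1 : forall i, C1_on S (f i).

Lemma Fi_diff i (x x0 y : 'rV[R]_n) :
  Fi i x y - Fi i x0 y =
  dot (grad (f i) x0) (x - x0) + dot (grad (f i) x - grad (f i) x0) (x - x0)
  - dot (grad (f i) x - grad (f i) x0) (y - x0) + (g i x - g i x0)
  - l / 2 * sqnorm (x - x0) + l * dot (x - x0) (y - x0).
Proof.
set Dx := grad (f i) x; set D0 := grad (f i) x0.
have e1 : 'd (f i) x (x - y) = dot Dx (x - y) := diff_dot _ _ _.
have e2 : 'd (f i) x0 (x0 - y) = dot D0 (x0 - y) := diff_dot _ _ _.
unfold Fi; move: e1 e2.
generalize ('d (f i) x (x - y)) ('d (f i) x0 (x0 - y)).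
move=> a b -> ->.
have := diff_identity Dx D0 x x0 y (l / 2).
have -> : 2 * (l / 2) = l by field.
lra.
Qed.

Lemma Fi_xcont i x0 : S x0 -> forall e, 0 < e ->
  \forall x \near x0, S x -> forall y,
    `|Fi i x y - Fi i x0 y| <= e * (1 + sqnorm (y - x0)).
Proof.
move=> Sx0 e e0.
have [U [_ SU _ hcont]] := fC1 i.
set D0 := grad (f i) x0.
set K := n%:R * `|D0| + 2 * n%:R + 1 + l / 2 * n%:R + l * n%:R.
have K0 : 0 <= K.
  have n0 : 0 <= n%:R :> R := ler0n _ _.
  have t1 : 0 <= n%:R * `|D0| := mulr_ge0 n0 (normr_ge0 _).
  have t2 : 0 <= l / 2 * n%:R by rewrite mulr_ge0 // divr_ge0 // ltW.
  have t3 : 0 <= l * n%:R by rewrite mulr_ge0 // ltW.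
  rewrite /K; lra.
set eta := e / (K + e).
have Ke : 0 < K + e by apply: ltr_pwDr.
have eta0 : 0 < eta by rewrite divr_gt0.
have eta1 : eta <= 1.
  by rewrite /eta ler_pdivrMr // mul1r; lra.
have etaK : eta * K <= e.
  have -> : eta * K = e * (K / (K + e)) by rewrite /eta; field; rewrite gt_eqF.
  rewrite ler_piMr ?ltW // ltr_pdivrMr // mul1r; lra.
have hD := cont_eps (hcont x0 (SU x0 Sx0)) eta0.
have hg := within_cont_eps (@gcont i) Sx0 eta0.
have hb : \forall z \near x0, `|x0 - z| < eta := ball_near eta0 (fun z h => h).
near=> x => Sx y.
have h1 : `|D0 - grad (f i) x| < eta by near: x.
have h2 : `|g i x0 - g i x| < eta by move: Sx; near: x.
have h3 : `|x0 - x| < eta by near: x.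
rewrite Fi_diff -/D0.
set u := x - x0; set v := y - x0; set Dx := grad (f i) x.
have nu : `|u| <= eta by rewrite /u distrC ltW.
have nd : `|Dx - D0| <= eta by rewrite /Dx distrC ltW.
have nv := norm_le_1sq v.
have nn : 0 <= n%:R :> R := ler0n _ _.
have b1 : `|dot D0 u| <= n%:R * `|D0| * eta.
  apply: (le_trans (dot_norm_le _ _)); rewrite -mulrA ler_wpM2l // ler_wpM2l //.
have b2 : `|dot (Dx - D0) u| <= n%:R * eta.
  apply: (le_trans (dot_norm_le _ _)); rewrite ler_wpM2l //.
  rewrite -[eta]mulr1; apply: ler_pM => //; exact: (le_trans nu).
have b3 : `|dot (Dx - D0) v| <= n%:R * eta * (1 + sqnorm v).
  apply: (le_trans (dot_norm_le _ _)); rewrite -mulrA ler_wpM2l //.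
  by apply: ler_pM.
have b4 : sqnorm u <= n%:R * eta.
  rewrite sqnorm_dot; apply: (le_trans (ler_norm _)); apply: (le_trans (dot_norm_le _ _)).
  rewrite ler_wpM2l // -[eta]mulr1; apply: ler_pM => //; exact: (le_trans nu).
have b5 : `|dot u v| <= n%:R * eta * (1 + sqnorm v).
  apply: (le_trans (dot_norm_le _ _)); rewrite -mulrA ler_wpM2l //.
  by apply: ler_pM.
have b6 := sqnorm_ge0 u.
have q0 := sqnorm_ge0 v.
move: b3 b5; set w := 1 + sqnorm v => b3 b5.
have w1 : 1 <= w by rewrite /w lerDl.
have l2 : 0 < l / 2 by rewrite divr_gt0.
have c7 : `|l * dot u v| <= l * (n%:R * eta * w) by rewrite normrM gtr0_norm // ler_pM2l.
rewrite ler_norml in b1. rewrite ler_norml in b2. rewrite ler_norml in b3.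
rewrite ler_norml in c7. rewrite ltr_norml in h2.
case/andP: b1 => b1 b1'; case/andP: b2 => b2 b2'; case/andP: b3 => b3 b3'.
case/andP: c7 => b7 b7'; case/andP: h2 => g1 g2.
have -> : g i x - g i x0 = - (g i x0 - g i x) by rewrite opprB.
exact: (fin_arith b1 b1' b2 b2' b3 b3' g1 g2 b6 b4 b7 b7' l0 nn (normr_ge0 _) (ltW eta0) w1 etaK).
Unshelve. all: by end_near.
Qed.

Lemma phi_xcont x0 : S x0 -> forall e, 0 < e ->
  \forall x \near x0, S x -> forall y,
    `|H x y - H x0 y| <= e * (1 + sqnorm (y - x0)).
Proof.
move=> Sx0 e e0.
near=> x => Sx y.
have hall : forall i, S x -> forall y, `|Fi i x y - Fi i x0 y| <= e * (1 + sqnorm (y - x0)).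
  near: x; apply: filter_forall => i; exact: Fi_xcont.
set c := e * (1 + sqnorm (y - x0)).
have h1 : H x y - c <= H x0 y.
  apply: phi_ge => i; have := hall i Sx y; rewrite ler_norml => /andP[_ h].
  have := phi_le x y i; rewrite -/c in h *; lra.
have h2 : H x0 y - c <= H x y.
  apply: phi_ge => i; have := hall i Sx y; rewrite ler_norml => /andP[h _].
  have := phi_le x0 y i; rewrite -/c in h *; lra.
rewrite ler_norml; apply/andP; split; lra.
Unshelve. all: by end_near.
Qed.

Lemma W_cont (W : 'rV[R]_n -> 'rV[R]_n)
  (hW : forall x, S x -> is_maximizer S f g l x (W x)) x0 :
  S x0 -> forall eta, 0 < eta ->
  \forall x \near x0, S x ->
    sqnorm (W x - W x0) <= eta /\ `|H x (W x) - H x0 (W x0)| <= eta.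
Proof.
move=> Sx0 eta eta0.
set c := sqnorm (W x0 - x0).
have c0 : 0 <= c := sqnorm_ge0 _.
have p1 : 0 < 2 + 3 * c by rewrite ltr_pwDl ?ltr0n // mulr_ge0.
have p2 : 0 < 3 + 5 * c by rewrite ltr_pwDl ?ltr0n // mulr_ge0.
set e' := Num.min (l / 8) (Num.min (eta * l / 4 / (2 + 3 * c)) (eta / (3 + 5 * c))).
have e'0 : 0 < e'.
  rewrite /e' !lt_min !divr_gt0 ?mulr_gt0 ?ltr0n //.
have h1 : e' <= l / 8 by rewrite /e' ge_min lexx.
have h2 : e' * (2 + 3 * c) <= eta * l / 4.
  rewrite -ler_pdivlMr //; rewrite /e' ge_min; apply/orP; right.
  by rewrite ge_min lexx.
have h3 : e' * (3 + 5 * c) <= eta.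
  rewrite -ler_pdivlMr //; rewrite /e' ge_min; apply/orP; right.
  by rewrite ge_min lexx orbT.
have hc := phi_xcont Sx0 e'0.
near=> x => Sx.
have hx : forall y, `|H x y - H x0 y| <= e' * (1 + sqnorm (y - x0)).
  by move: Sx; near: x.
have m0 := hW x0 Sx0; have mx := hW x Sx.
have hA := max_growth m0 mx.1.
have hC := max_growth mx m0.1.
have ed : sqnorm (W x0 - W x) = sqnorm (W x - W x0).
  by rewrite -opprB sqnormN.
rewrite ed in hC.
have hs : sqnorm (W x - x0) <= 2 * sqnorm (W x - W x0) + 2 * c.
  have -> : W x - x0 = (W x - W x0) + (W x0 - x0) by rewrite addrA subrK.
  exact: sqnormD_le.
have hDA := hx (W x).
have hCB : `|H x (W x0) - H x0 (W x0)| <= e' * (1 + c) := hx (W x0).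
exact: (W_arith l0 eta0 c0 (sqnorm_ge0 _) (ltW e'0) h1 h2 h3 hA hC hDA hCB hs).
Unshelve. all: by end_near.
Qed.

Lemma w_val_eq x y : is_maximizer S f g l x y -> w_val S f g l x = H x y.
Proof.
move=> [Sy hm]; rewrite /w_val; apply/le_anti/andP; split.
  by apply: ge_sup; [exists (H x y), y | move=> _ [z Sz <-]; exact: hm].
apply: sup_upper_bound; last by exists y.
split; first by exists (H x y), y.
by exists (H x y) => _ [z Sz <-]; exact: hm.
Qed.

End Main.

Unset Implicit Arguments.

Theorem theorem3p12 (R : realType) (n m : nat) (S : set 'rV[R]_n)
  (f g : 'I_m.+1 -> 'rV[R]_n -> R) :
  S !=set0 -> closed S -> convex_set_on S ->
  (forall i, C1_on S (f i)) ->
  (forall i, convex_fun_on S (g i)) ->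
  (forall i, {within S, continuous (g i)}) ->
  forall l : R, 0 < l ->
    (* W_l is well defined: unique maximizer *)
    (forall x, S x -> exists! y, is_maximizer S f g l x y) /\
    (* w_l is continuous on S *)
    {within S, continuous (w_val S f g l)} /\
    (* W_l is continuous on S *)
    (forall W : 'rV[R]_n -> 'rV[R]_n,
       (forall x, S x -> is_maximizer S f g l x (W x)) ->
       {within S, continuous W}).
Proof.
move=> S0 Scl Scv fC gcv gct l l0.
have hex : forall x, S x -> exists y, is_maximizer S f g l x y.
  by move=> x Sx; apply: (max_exists f l0 Scv gcv gct Scl Sx).
have huniq : forall x y1 y2, is_maximizer S f g l x y1 ->
    is_maximizer S f g l x y2 -> y1 = y2.
  by move=> x y1 y2; apply: (max_unique l0 Scv gcv).
have hWc := W_cont l0 Scv gcv gct fC.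
split.
  move=> x Sx; have [y hy] := hex x Sx; exists y; split => // z hz.
  exact: huniq hy hz.
split.
  have : forall x, exists y, S x -> is_maximizer S f g l x y.
    move=> x; case: (pselect (S x)) => Sx.
      by have [y hy] := hex x Sx; exists y.
    by exists x.
  case/choice => W hW.
  apply: eps_within_cont => x0 Sx0 e e0.
  have e2 : 0 < e / 2 by rewrite divr_gt0.
  have hh := hWc W hW x0 Sx0 _ e2.
  near=> x => Sx.
  have [_ h2] : sqnorm (W x - W x0) <= e / 2 /\
      `|phi f g l x (W x) - phi f g l x0 (W x0)| <= e / 2.
    by move: Sx; near: x.
  rewrite (w_val_eq (hW x Sx)) (w_val_eq (hW x0 Sx0)) distrC.
  apply: (le_lt_trans h2); lra.
move=> W hW; apply: eps_within_cont => x0 Sx0 e e0.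
have e2 : 0 < e ^+ 2 / 2 by rewrite divr_gt0 ?exprn_gt0.
have hh := hWc W hW x0 Sx0 _ e2.
near=> x => Sx.
have [h1 _] : sqnorm (W x - W x0) <= e ^+ 2 / 2 /\
    `|phi f g l x (W x) - phi f g l x0 (W x0)| <= e ^+ 2 / 2.
  by move: Sx; near: x.
apply: norm_lt_of_sq => //.
rewrite -opprB sqnormN; apply: (le_lt_trans h1).
have : 0 < e ^+ 2 by rewrite exprn_gt0.
lra.
Unshelve. all: by end_near.
Qed.
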